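(* Consider the Markov process described in the context with $K=1$, satisfying Assumption (A) and the ergodicity condition (E). For each $x\in\{-1,1\}^c$ let $\beta_{0,x}$ denote the unique root in $(0,1)$ of equation $(\mathrm E_x)$. Then the largest of the $2^c$ roots $\beta_{0,x}$ is attained at $x=(1,1,\dots,1)$, i.e. $\beta_{0,x}\le\beta_{0,(1,\dots,1)}$ for all $x\in\{-1,1\}^c$.
   Context: Fix integers $c\ge 1$ and $K\ge1$ (in the claim $K=1$). Consider an irreducible continuous-time Markov process on $V\cup W$, where $V$ is finite and $W=\{\mathbf n=(n_0,\dots,n_c): n_0\in\{0,1,\dots\},\ n_i\in\{0,1\}\}$. For each $i\in\{1,\dots,c\}$ and integer $k\le K$ there are nonnegative rates $a_{k,i},b_{k,i},c_{k,i},d_{k,i}$. From $\mathbf n\in W$, for each $i$ and $k\in\{-n_0,\dots,K\}$, the process jumps (changing only coordinates $0$ and $i$) from $(n_0,n_i)=(n_0,0)$ to $(n_0+k,1)$ at rate $a_{k,i}$ and to $(n_0+k,0)$ at rate $b_{k,i}$, and from $(n_0,1)$ to $(n_0+k,1)$ at rate $c_{k,i}$ and to $(n_0+k,0)$ at rate $d_{k,i}$; from $\mathbf n$ it jumps into $V$ with total rate $\sum_i\sum_{k\le -n_0-1}((1-n_i)(a_{k,i}+b_{k,i})+n_i(c_{k,i}+d_{k,i}))$; no other transitions leave $W$, and from $V$ no transitions go to states with $n_0\ge K$. Let $A_i(z)=\sum_{k=-\infty}^K a_{k,i}z^{K-k}$ and similarly $B_i,C_i,D_i$ with $b,c,d$.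 Assumption (A): for each $i$: (i) $A_i(1),B_i(1),C_i(1),D_i(1)<\infty$; (ii) $A_i(1),D_i(1)>0$; (iii) $A_i'(1),B_i'(1),C_i'(1),D_i'(1)<\infty$; (iv) $a_{K,i}=0$ or $d_{K,i}=0$; (v) $b_{K,i}=c_{K,i}\ne0$. Ergodicity condition (E): $0<\sum_{i=1}^c\frac{1}{A_i(1)+D_i(1)}\bigl(D_i(1)(A_i'(1)-KA_i(1)+B_i'(1)-KB_i(1))+A_i(1)(C_i'(1)-KC_i(1)+D_i'(1)-KD_i(1))\bigr)$. Let $F_i(z)=z^K(A_i(1)+B_i(1)-C_i(1)-D_i(1))-B_i(z)+C_i(z)$. For real $\beta_0\in[0,1]$ let $R_i(\beta_0)=\sqrt{F_i(\beta_0)^2+4A_i(\beta_0)D_i(\beta_0)}$ (nonnegative square root). For $x\in\{-1,1\}^c$, equation $(\mathrm E_x)$ in the unknown $\beta_0$ is \[0=\sum_{i=1}^c\Bigl(x_iR_i(\beta_0)+B_i(\beta_0)+C_i(\beta_0)-\beta_0^K\bigl(A_i(1)+B_i(1)+C_i(1)+D_i(1)\bigr)\Bigr).\] *)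

(* Defs.v *)
From HB Require Import structures.
From mathcomp Require Import all_boot all_order all_algebra.
From mathcomp Require Import all_classical all_reals all_analysis.
Set Implicit Arguments. Unset Strict Implicit. Unset Printing Implicit Defensive.
Import Order.TTheory GRing.Theory Num.Theory.
Import numFieldNormedType.Exports.
Local Open Scope ring_scope.

(* Convention (K = 1): a rate family (a_{k,i})_{k <= 1} for a fixed i is
   encoded as a sequence  a : nat -> R  with  a m = a_{1-m,i}  (m = K - k).
   Hence A_i(z) = sum_{k<=K} a_{k,i} z^{K-k} = sum_{m>=0} a m z^m. *)

Section GF.
Variable R : realType.

Definition gf (a : nat -> R) (z : R) : R :=
  limn (series (fun m => a m * z ^+ m)).

Definition gf_finite1 (a : nat -> R) : Prop := cvgn (series a).

(* A'(1) = sum_m m a m  (the derivative of the power series at z = 1) *)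
Definition dgf1 (a : nat -> R) : R := limn (series (fun m => m%:R * a m)).

Definition dgf1_finite (a : nat -> R) : Prop :=
  cvgn (series (fun m => m%:R * a m)).

Definition Kc : nat := 1.

Definition assumptionA (a b c d : nat -> R) : Prop :=
  ((forall m, 0 <= a m) /\ (forall m, 0 <= b m) /\
      (forall m, 0 <= c m) /\ (forall m, 0 <= d m)) /\
      (gf_finite1 a /\ gf_finite1 b /\ gf_finite1 c /\ gf_finite1 d) /\
      (0 < gf a 1 /\ 0 < gf d 1) /\
      (dgf1_finite a /\ dgf1_finite b /\ dgf1_finite c /\ dgf1_finite d) /\
      (* (iv): a_{K,i} = 0 or d_{K,i} = 0 *) (a 0%N = 0 \/ d 0%N = 0) /\
      (* (v): b_{K,i} = c_{K,i} <> 0 *) (b 0%N = c 0%N /\ b 0%N <> 0).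

Definition Ffun (a b c d : nat -> R) (z : R) : R :=
  z ^+ Kc * (gf a 1 + gf b 1 - gf c 1 - gf d 1) - gf b z + gf c z.

Definition Rfun (a b c d : nat -> R) (z : R) : R :=
  Num.sqrt (Ffun a b c d z ^+ 2 + 4 * gf a z * gf d z).

End GF.

Definition ergodicE (R : realType) (n : nat) (a b c d : 'I_n -> nat -> R) : Prop :=
  0 < \sum_(i < n) (gf (a i) 1 + gf (d i) 1)^-1 *
        (gf (d i) 1 * (dgf1 (a i) - Kc%:R * gf (a i) 1 + dgf1 (b i) - Kc%:R * gf (b i) 1)
       + gf (a i) 1 * (dgf1 (c i) - Kc%:R * gf (c i) 1 + dgf1 (d i) - Kc%:R * gf (d i) 1)).

Definition eqEx (R : realType) (n : nat) (a b c d : 'I_n -> nat -> R)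
  (x : 'I_n -> R) (beta0 : R) : Prop :=
  0 = \sum_(i < n) (x i * Rfun (a i) (b i) (c i) (d i) beta0
                    + gf (b i) beta0 + gf (c i) beta0
                    - beta0 ^+ Kc * (gf (a i) 1 + gf (b i) 1 + gf (c i) 1 + gf (d i) 1)).

(* Main.v *)
Require Import Defs.
From HB Require Import structures.
From mathcomp Require Import all_boot all_order all_algebra.
From mathcomp Require Import all_classical all_reals all_analysis.
Import Order.TTheory GRing.Theory Num.Theory.
Import numFieldNormedType.Exports.
Local Open Scope ring_scope.
From mathcomp Require Import ring lra.

Section Lam.
Variable R : realType.
Implicit Types p q r s mu : R.

Definition lam p q r s : R := (p + q + Num.sqrt ((p - q) ^+ 2 + 4 * r * s)) / 2.

Lemma lam_shift p q r s k : lam (p + k) (q + k) r s = lam p q r s + k.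
Proof. rewrite /lam. have -> : p + k - (q + k) = p - q by ring. by field. Qed.

Lemma lam_scale p q r s b : 0 < b ->
  lam (b * p) (b * q) (b * r) (b * s) = b * lam p q r s.
Proof.
move=> b0; rewrite /lam.
have -> : (b * p - b * q) ^+ 2 + 4 * (b * r) * (b * s) = b ^+ 2 * ((p - q) ^+ 2 + 4 * r * s) by ring.
rewrite sqrtrM ?sqr_ge0 // sqrtr_sqr gtr0_norm //; by field.
Qed.

Lemma sqrt_ge_absdiff p q r s : 0 <= r -> 0 <= s ->
  `|p - q| <= Num.sqrt ((p - q) ^+ 2 + 4 * r * s).
Proof.
move=> r0 s0; rewrite -sqrtr_sqr ler_sqrt.
  by rewrite lerDl; apply: mulr_ge0 => //; apply: mulr_ge0.
by apply: addr_ge0; [exact: sqr_ge0|rewrite !mulr_ge0].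
Qed.

Lemma sqrt_gt_absdiff p q r s : 0 < r -> 0 < s ->
  `|p - q| < Num.sqrt ((p - q) ^+ 2 + 4 * r * s).
Proof.
move=> r0 s0; rewrite -sqrtr_sqr; rewrite ltr_sqrt; last first.
  by apply: ltr_wpDl; [exact: sqr_ge0|rewrite !mulr_gt0].
by rewrite ltrDl !mulr_gt0.
Qed.

Lemma lam_subp_gt0 p q r s : 0 < r -> 0 < s -> 0 < lam p q r s - p.
Proof.
move=> r0 s0; have := sqrt_gt_absdiff p q r s r0 s0.
rewrite /lam; move: (Num.sqrt _) => S h.
have : p - q < S by apply: le_lt_trans h; exact: ler_norm.
move=> hh; rewrite subr_gt0 ltr_pdivlMr //; lra.
Qed.

Lemma sqrt_sq_eq p q r s : 0 <= r -> 0 <= s ->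
  Num.sqrt ((p - q) ^+ 2 + 4 * r * s) ^+ 2 = (p - q) ^+ 2 + 4 * r * s.
Proof.
move=> r0 s0; rewrite sqr_sqrtr //; apply: addr_ge0; first exact: sqr_ge0.
by rewrite !mulr_ge0.
Qed.

Lemma lam_perron p q r s : 0 <= r -> 0 <= s ->
  s * r + q * (lam p q r s - p) = lam p q r s * (lam p q r s - p).
Proof.
move=> r0 s0; have := sqrt_sq_eq p q r s r0 s0.
rewrite /lam; set S := Num.sqrt _ => h.
apply/eqP; rewrite -subr_eq0; apply/eqP.
have -> : s * r + q * ((p + q + S) / 2 - p) - (p + q + S) / 2 * ((p + q + S) / 2 - p)
  = (4 * r * s + (p - q) ^+ 2 - S ^+ 2) / 4 by field.
rewrite h; by field.
Qed.

(* Collatz-Wielandt upper bound *)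
Lemma lam_CW p q r s mu v1 v2 : 0 < v1 -> 0 < v2 -> 0 <= r -> 0 <= s ->
  p * v1 + r * v2 <= mu * v1 -> s * v1 + q * v2 <= mu * v2 ->
  lam p q r s <= mu.
Proof.
move=> v10 v20 r0 s0 h1 h2.
have hp : r * v2 <= (mu - p) * v1 by lra.
have hq : s * v1 <= (mu - q) * v2 by lra.
have mp : 0 <= mu - p.
  rewrite -(pmulr_lge0 _ v10); apply: le_trans hp; by rewrite mulr_ge0 // ltW.
have mq : 0 <= mu - q.
  rewrite -(pmulr_lge0 _ v20); apply: le_trans hq; by rewrite mulr_ge0 // ltW.
have hrs : r * s <= (mu - p) * (mu - q).
  have : (r * v2) * (s * v1) <= ((mu - p) * v1) * ((mu - q) * v2).
    apply: ler_pM => //; by rewrite mulr_ge0 // ltW.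
  have -> : r * v2 * (s * v1) = (r * s) * (v1 * v2) by ring.
  have -> : (mu - p) * v1 * ((mu - q) * v2) = ((mu - p) * (mu - q)) * (v1 * v2) by ring.
  by rewrite ler_pM2r // mulr_gt0.
rewrite /lam ler_pdivrMr // -lerBrDl.
have h0 : 0 <= mu * 2 - (p + q) by lra.
rewrite -(ger0_norm h0) -sqrtr_sqr ler_sqrt; last exact: sqr_ge0.
have -> : (mu * 2 - (p + q)) ^+ 2 = (p - q) ^+ 2 + 4 * ((mu - p) * (mu - q)) by ring.
by rewrite lerD2l -mulrA ler_pM2l.
Qed.

End Lam.
Arguments lam {R}.
Arguments lam_shift {R}.
Arguments lam_scale {R}.
Arguments lam_subp_gt0 {R} p q {r s}.
Arguments lam_perron {R} p q {r s}.
Arguments lam_CW {R} p q r s mu v1 v2.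
Arguments sqrt_sq_eq {R} p q {r s}.

Section GM.
Variable R : realType.
Variable th : R.
Hypothesis th0 : 0 < th.
Hypothesis th1 : th < 1.

Definition G (x y : R) : R := x `^ th * y `^ (1 - th).

Lemma th1' : 0 < 1 - th. Proof. by rewrite subr_gt0. Qed.

Lemma G_ge0 x y : 0 <= G x y.
Proof. by rewrite /G mulr_ge0 // powR_ge0. Qed.

Lemma G_gt0 x y : 0 < x -> 0 < y -> 0 < G x y.
Proof. by move=> x0 y0; rewrite /G mulr_gt0 // powR_gt0. Qed.

Lemma G_mul x y x' y' : 0 <= x -> 0 <= y -> 0 <= x' -> 0 <= y' ->
  G (x * x') (y * y') = G x y * G x' y'.
Proof. by move=> *; rewrite /G !powRM //; ring. Qed.

Lemma G_le x y x' y' : 0 <= x -> 0 <= y -> x <= x' -> y <= y' -> G x y <= G x' y'.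
Proof.
move=> x0 y0 xx yy; rewrite /G; apply: ler_pM; try exact: powR_ge0.
  apply: (ge0_ler_powR (ltW th0)) => //; rewrite nnegrE //; exact: le_trans xx.
apply: (ge0_ler_powR (ltW th1')) => //; rewrite nnegrE //; exact: le_trans yy.
Qed.

Lemma G_cst x : 0 <= x -> G x x = x.
Proof.
move=> x0; have := @powRD R x th (1 - th).
have -> : th + (1 - th) = 1 by ring.
by rewrite oner_eq0 /= /G => <- //; rewrite powRr1.
Qed.

Lemma powR_inv_pow (x r : R) : 0 <= x -> r != 0 -> (x `^ r) `^ r^-1 = x.
Proof. by move=> x0 r0; rewrite -powRrM mulfV // powRr1. Qed.

Lemma G_sum x1 x2 y1 y2 : 0 <= x1 -> 0 <= x2 -> 0 <= y1 -> 0 <= y2 ->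
  G x1 y1 + G x2 y2 <= G (x1 + x2) (y1 + y2).
Proof.
move=> x10 x20 y10 y20; rewrite /G.
have thn : th != 0 by rewrite gt_eqF.
have thn' : 1 - th != 0 by rewrite gt_eqF // th1'.
have := @hoelder2 R (x1 `^ th) (x2 `^ th) (y1 `^ (1 - th)) (y2 `^ (1 - th)) th^-1 (1 - th)^-1
  (powR_ge0 _ _) (powR_ge0 _ _) (powR_ge0 _ _) (powR_ge0 _ _).
rewrite !invr_gt0 th0 th1' !invrK !powR_inv_pow //.
by apply; ring.
Qed.

Lemma G_young a b : 0 <= a -> 0 <= b -> G a b <= th * a + (1 - th) * b.
Proof.
move=> a0 b0; rewrite /G.
have thn : th != 0 by rewrite gt_eqF.
have thn' : 1 - th != 0 by rewrite gt_eqF // th1'.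
have := @conjugate_powR R (a `^ th) (b `^ (1 - th)) th^-1 (1 - th)^-1
  (powR_ge0 _ _) (powR_ge0 _ _).
rewrite !invr_gt0 th0 th1' !invrK !powR_inv_pow // /=.
rewrite (mulrC th) (mulrC (1 - th)); by apply; ring.
Qed.

Lemma kingman (p0 q0 r0 s0 p1 q1 r1 s1 p q r s : R) :
  0 <= p0 -> 0 <= q0 -> 0 < r0 -> 0 < s0 ->
  0 <= p1 -> 0 <= q1 -> 0 < r1 -> 0 < s1 ->
  0 <= p -> 0 <= q -> 0 <= r -> 0 <= s ->
  p <= G p0 p1 -> q <= G q0 q1 -> r <= G r0 r1 -> s <= G s0 s1 ->
  lam p q r s <= G (lam p0 q0 r0 s0) (lam p1 q1 r1 s1).
Proof.
move=> p00 q00 r00 s00 p10 q10 r10 s10 p0' q0' r0' s0' hp hq hr hs.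
set L0 := lam p0 q0 r0 s0; set L1 := lam p1 q1 r1 s1.
have w00 : 0 < L0 - p0 := lam_subp_gt0 p0 q0 r00 s00.
have w10 : 0 < L1 - p1 := lam_subp_gt0 p1 q1 r10 s10.
have L00 : 0 <= L0 by have := w00; lra.
have L10 : 0 <= L1 by have := w10; lra.
have per0 := lam_perron p0 q0 (ltW r00) (ltW s00).
have per1 := lam_perron p1 q1 (ltW r10) (ltW s10).
rewrite -/L0 in per0; rewrite -/L1 in per1.
apply: (@lam_CW R p q r s _ (G r0 r1) (G (L0 - p0) (L1 - p1))).
- exact: G_gt0.
- exact: G_gt0.
- done.
- done.
- apply: (@le_trans _ _ (G p0 p1 * G r0 r1 + G r0 r1 * G (L0 - p0) (L1 - p1))).
    apply: lerD; [apply: ler_wpM2r; [exact: G_ge0|done]|].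
    apply: ler_wpM2r; [exact: G_ge0|done].
  rewrite -!G_mul //; try exact: ltW.
  have nn : forall a b : R, 0 <= a -> 0 <= b -> 0 <= a * b by move=> a b ? ?; rewrite mulr_ge0.
  apply: le_trans (G_sum _ _ _ _ (nn _ _ p00 (ltW r00)) (nn _ _ (ltW r00) (ltW w00))
     (nn _ _ p10 (ltW r10)) (nn _ _ (ltW r10) (ltW w10))) _.
  apply: G_le; try by rewrite addr_ge0 // mulr_ge0 // ltW.
    by rewrite le_eqVlt; apply/orP; left; apply/eqP; ring.
  by rewrite le_eqVlt; apply/orP; left; apply/eqP; ring.
- apply: (@le_trans _ _ (G s0 s1 * G r0 r1 + G q0 q1 * G (L0 - p0) (L1 - p1))).
    apply: lerD; [apply: ler_wpM2r; [exact: G_ge0|done]|].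
    apply: ler_wpM2r; [exact: G_ge0|done].
  rewrite -!G_mul //; try exact: ltW.
  have nn : forall a b : R, 0 <= a -> 0 <= b -> 0 <= a * b by move=> a b ? ?; rewrite mulr_ge0.
  apply: le_trans (G_sum _ _ _ _ (nn _ _ (ltW s00) (ltW r00)) (nn _ _ q00 (ltW w00))
     (nn _ _ (ltW s10) (ltW r10)) (nn _ _ q10 (ltW w10))) _.
  by rewrite per0 per1.
Qed.

End GM.
Arguments G_ge0 {R th}. Arguments G_gt0 {R th}. Arguments G_mul {R th}.
Arguments G_le {R th}. Arguments G_cst {R th}. Arguments G_sum {R th}.
Arguments G_young {R th}. Arguments kingman {R th}.

Section Ser.
Variable R : realType.
Implicit Types (u : R ^nat) (a : nat -> R) (x z : R).

Lemma lim_le_of u x : cvgn u -> (forall n, u n <= x) -> limn u <= x.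
Proof. by move=> cu h; apply: limr_le => //; apply: nearW. Qed.

Lemma series_le_lim u n : (forall m, 0 <= u m) -> cvgn (series u) -> series u n <= limn (series u).
Proof.
move=> u0 cu; apply: nondecreasing_cvgn_le => //.
rewrite seriesEnat; exact: nondecreasing_series.
Qed.

Lemma lim_ge_of u x : cvgn u -> (forall n, x <= u n) -> x <= limn u.
Proof. by move=> cu h; apply: limr_ge => //; apply: nearW. Qed.

Lemma series_near_lim u e : cvgn u -> 0 < e -> exists N, limn u - e <= u N.
Proof.
move=> cu e0; apply/not_existsP => h.
have : limn u <= limn u - e.
  apply: lim_le_of => // n; have := h n; move/negP; rewrite -ltNge; exact: ltW.
lra.
Qed.

Definition T a z : R ^nat := fun m => a m * z ^+ m.



Lemma cvg_gf a z : (forall m, 0 <= a m) -> gf_finite1 a -> 0 <= z <= 1 ->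
  cvgn (series (T a z)).
Proof.
move=> a0 ca /andP[z0 z1]; apply: (series_le_cvg (v_ := a)) => // n.
- by rewrite /T mulr_ge0 // exprn_ge0.
- rewrite /T; rewrite -[leRHS]mulr1; apply: ler_wpM2l => //; exact: exprn_ile1.
Qed.

Lemma gf_ge_sum a z n : (forall m, 0 <= a m) -> gf_finite1 a -> 0 <= z <= 1 ->
  series (T a z) n <= gf a z.
Proof.
move=> a0 ca hz; apply: series_le_lim; last exact: cvg_gf.
by move=> m; rewrite /T mulr_ge0 // exprn_ge0 //; case/andP: hz.
Qed.

Lemma gf_le a z x : (forall m, 0 <= a m) -> gf_finite1 a -> 0 <= z <= 1 ->
  (forall n, series (T a z) n <= x) -> gf a z <= x.
Proof. by move=> a0 ca hz h; apply: lim_le_of => //; exact: cvg_gf. Qed.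

Lemma gf_ge0 a z : (forall m, 0 <= a m) -> gf_finite1 a -> 0 <= z <= 1 -> 0 <= gf a z.
Proof.
move=> a0 ca hz; apply: le_trans (@gf_ge_sum a z 0%N a0 ca hz).
by rewrite /series /= big_geq.
Qed.

Lemma gf1 a : gf a 1 = limn (series a).
Proof. by rewrite /gf; congr (limn (series _)); apply/funext => m; rewrite expr1n mulr1. Qed.

Lemma gf_pos a z : (forall m, 0 <= a m) -> gf_finite1 a -> 0 < gf a 1 -> 0 < z <= 1 ->
  0 < gf a z.
Proof.
move=> a0 ca g1 /andP[z0 z1].
have hz : 0 <= z <= 1 by rewrite ltW.
have [m am] : exists m, 0 < a m.
  apply/not_existsP => h.
  have az : forall m, a m = 0.
    by move=> m; apply/eqP; rewrite eq_le a0 andbT leNgt; apply/negP => /(fun q => h m q).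
  move: g1; rewrite gf1.
  have -> : series a = fun=> 0.
    apply/funext => n; rewrite /series /=; rewrite big1 // => i _; exact: az.
  by rewrite lim_cst; [rewrite ltxx|]. 
apply: lt_le_trans (@gf_ge_sum a z m.+1 a0 ca hz).
rewrite /series /= big_nat_recr //=.
apply: ltr_wpDl; last by rewrite /T mulr_gt0 // exprn_gt0.
by apply: sumr_ge0 => i _; rewrite /T mulr_ge0 // exprn_ge0 // ltW.
Qed.

End Ser.
Arguments T {R}.
Arguments lim_le_of {R}. Arguments series_le_lim {R}. Arguments lim_ge_of {R}.
Arguments series_near_lim {R}. Arguments cvg_gf {R}. Arguments gf_ge_sum {R a z}.
Arguments gf_le {R}. Arguments gf_ge0 {R a z}. Arguments gf1 {R}. Arguments gf_pos {R a z}.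

Section LC.
Variable R : realType.
Variables th b1 bu : R.
Hypothesis th0 : 0 < th.
Hypothesis th1 : th < 1.
Hypothesis hb1 : 0 < b1 <= 1.
Hypothesis hbu : 0 < bu <= 1.
Let GG := G R th.
Let b0 := GG b1 bu.

Lemma b0_gt0 : 0 < b0.
Proof. by case/andP: hb1 => ? _; case/andP: hbu => ? _; apply: G_gt0. Qed.

Lemma b0_le1 : b0 <= 1.
Proof.
case/andP: hb1 => ? ?; case/andP: hbu => ? ?.
rewrite -[leRHS](@G_cst R th) //; apply: G_le => //; exact: ltW.
Qed.

Lemma pow_G n : b0 ^+ n = GG (b1 ^+ n) (bu ^+ n).
Proof.
case/andP: hb1 => ? ?; case/andP: hbu => ? ?.
elim: n => [|n IH]; first by rewrite !expr0 /GG G_cst.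
by rewrite !exprS IH /GG G_mul // ?exprn_ge0 // ltW.
Qed.

Lemma partial_LC (a : nat -> R) n : (forall m, 0 <= a m) ->
  series (T a b0) n <= GG (series (T a b1) n) (series (T a bu) n).
Proof.
case/andP: hb1 => b10 ?; case/andP: hbu => bu0 ? a0.
have hT : forall z m, 0 <= z -> 0 <= T a z m by move=> z m z0; rewrite /T mulr_ge0 // exprn_ge0.
have hS : forall z k, 0 <= z -> 0 <= series (T a z) k.
  by move=> z k z0; rewrite /series /=; apply: sumr_ge0 => i _; exact: hT.
elim: n => [|n IH].
  by rewrite /series /= !big_geq // /GG G_cst.
rewrite !seriesSr.
have -> : T a b0 n = GG (T a b1 n) (T a bu n).
  by rewrite /T pow_G /GG G_mul ?G_cst // ?exprn_ge0 // ltW.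
apply: le_trans _ (G_sum th0 th1 _ _ _ _ (hS _ n (ltW b10)) (hT _ n (ltW b10)) (hS _ n (ltW bu0)) (hT _ n (ltW bu0))).
by rewrite lerD2r.
Qed.

Lemma gf_LC (a : nat -> R) : (forall m, 0 <= a m) -> gf_finite1 a ->
  gf a b0 <= GG (gf a b1) (gf a bu).
Proof.
move=> a0 ca; have hb0 : 0 <= b0 <= 1 by rewrite ltW ?b0_gt0 ?b0_le1.
have hb1' : 0 <= b1 <= 1 by case/andP: hb1 => ? ->; rewrite ltW.
have hbu' : 0 <= bu <= 1 by case/andP: hbu => ? ->; rewrite ltW.
apply: gf_le => // n; apply: le_trans (partial_LC a n a0) _.
have hS : forall z k, 0 <= z -> 0 <= series (T a z) k.
  by move=> z k z0; rewrite /series /=; apply: sumr_ge0 => i _; rewrite /T mulr_ge0 // exprn_ge0.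
apply: G_le => //; try apply: hS; try by case/andP: hb1' . 
- by case/andP: hbu'.
- exact: gf_ge_sum.
- exact: gf_ge_sum.
Qed.

Lemma inv_G : b0^-1 = GG b1^-1 bu^-1.
Proof.
case/andP: hb1 => ? ?; case/andP: hbu => ? ?.
have h : b0 * GG b1^-1 bu^-1 = 1.
  rewrite /b0 /GG -G_mul ?invr_ge0 ?ltW // !mulfV ?gt_eqF // G_cst //.
have nz : b0 != 0 by rewrite gt_eqF // b0_gt0.
by apply: (mulfI nz); rewrite h mulfV.
Qed.

Lemma entry_LC (a : nat -> R) (k : R) : (forall m, 0 <= a m) -> gf_finite1 a -> 0 <= k ->
  gf a b0 / b0 + k <= GG (gf a b1 / b1 + k) (gf a bu / bu + k).
Proof.
move=> a0 ca k0.
have hb1' : 0 <= b1 <= 1 by case/andP: hb1 => ? ->; rewrite ltW.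
have hbu' : 0 <= bu <= 1 by case/andP: hbu => ? ->; rewrite ltW.
have g1 := gf_ge0 a0 ca hb1'; have gu := gf_ge0 a0 ca hbu'.
have i1 : 0 <= b1^-1 by rewrite invr_ge0; case/andP: hb1' .
have iu : 0 <= bu^-1 by rewrite invr_ge0; case/andP: hbu' .
apply: le_trans _ (G_sum th0 th1 _ _ _ _ _ k0 _ k0); last 2 first.
- exact: mulr_ge0.
- exact: mulr_ge0.
rewrite G_cst // lerD2r inv_G /GG G_mul //.
apply: ler_wpM2r; first exact: G_ge0.
exact: gf_LC.
Qed.

End LC.

Section Deriv.
Variable R : realType.

Lemma bern1 (h : R) m : 0 <= h <= 1 -> 1 - m%:R * h <= (1 - h) ^+ m.
Proof.
case/andP=> h0 h1; elim: m => [|m IH]; first by rewrite mul0r subr0 expr0.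
rewrite exprS.
have e : 0 <= 1 - h by lra.
apply: le_trans (ler_wpM2l e IH).
rewrite -natr1; have : 0 <= m%:R * h * h by rewrite mulr_ge0 // mulr_ge0.
move=> hh. have -> : (1 - h) * (1 - m%:R * h) = 1 - (m%:R + 1) * h + m%:R * h * h by ring.
lra.
Qed.

Lemma bern2 (h : R) m : 0 <= h <= 1 -> (1 - h) ^+ m <= 1 - m%:R * h + (m%:R * h) ^+ 2.
Proof.
case/andP=> h0 h1; elim: m => [|m IH]; first by rewrite mul0r subr0 expr0 expr0n /= addr0.
rewrite exprS.
have e : 0 <= 1 - h by lra.
apply: le_trans (ler_wpM2l e IH) _.
rewrite -natr1.
have m0 : 0 <= (m%:R : R) by [].
have : 0 <= m%:R ^+ 2 * h ^+ 3 by rewrite mulr_ge0 // exprn_ge0.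
have : 0 <= m%:R * h ^+ 2 by rewrite mulr_ge0 // exprn_ge0.
have : 0 <= h ^+ 2 by rewrite exprn_ge0.
move=> q1 q2 q3.
have -> : (1 - h) * (1 - m%:R * h + (m%:R * h) ^+ 2) =
  1 - (m%:R + 1) * h + ((m%:R + 1) * h) ^+ 2 - (m%:R * h ^+ 2 + m%:R ^+ 2 * h ^+ 3 + h ^+ 2) by ring.
lra.
Qed.

Variable a : nat -> R.
Hypothesis a0 : forall m, 0 <= a m.
Hypothesis ca : gf_finite1 a.
Hypothesis cda : dgf1_finite a.

Let ma : R ^nat := fun m => m%:R * a m.

Lemma ma0 m : 0 <= ma m. Proof. by rewrite /ma mulr_ge0. Qed.

Lemma dgf1_ge0 : 0 <= dgf1 a.
Proof.
apply: le_trans (series_le_lim ma 0 ma0 cda).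
by rewrite /series /= big_geq.
Qed.

Let dterm (h : R) : R ^nat := T a 1 - T a (1 - h).

Lemma gf_diff (h : R) : 0 <= h <= 1 -> gf a 1 - gf a (1 - h) = limn (series (dterm h)).
Proof.
move=> hh; have h' : 0 <= 1 - h <= 1 by lra.
have c1 : cvgn (series (T a 1)) by apply: cvg_gf => //; rewrite ler01 lexx.
have c2 := cvg_gf _ _ a0 ca h'.
by rewrite /dterm lim_seriesB.
Qed.

Lemma dterm_eq (h : R) m : dterm h m = a m * (1 - (1 - h) ^+ m).
Proof. rewrite mulrBr mulr1 /dterm /T. by rewrite [LHS]/GRing.add /= expr1n mulr1. Qed.

Lemma dterm_ge0 (h : R) m : 0 <= h <= 1 -> 0 <= dterm h m.
Proof.
move=> /andP[h0 h1]; rewrite dterm_eq mulr_ge0 // subr_ge0.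
apply: exprn_ile1; lra.
Qed.

Lemma dterm_cvg (h : R) : 0 <= h <= 1 -> cvgn (series (dterm h)).
Proof.
move=> hh; have h' : 0 <= 1 - h <= 1 by lra.
have c1 : cvgn (series (T a 1)) by apply: cvg_gf => //; rewrite ler01 lexx.
exact: is_cvg_seriesB c1 (cvg_gf _ _ a0 ca h').
Qed.

Lemma diff_ge0 (h : R) : 0 <= h <= 1 -> 0 <= gf a 1 - gf a (1 - h).
Proof.
move=> hh; rewrite gf_diff //; apply: le_trans (series_le_lim _ 0 (fun m => dterm_ge0 h m hh) (dterm_cvg h hh)).
by rewrite /series /= big_geq.
Qed.

Lemma diff_le (h : R) : 0 <= h <= 1 -> gf a 1 - gf a (1 - h) <= h * dgf1 a.
Proof.
move=> hh; rewrite gf_diff //; apply: lim_le_of; first exact: dterm_cvg.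
move=> n; apply: le_trans (_ : h * series ma n <= _).
  rewrite /series /= mulr_sumr; apply: ler_sum => m _.
  rewrite dterm_eq /ma; have -> : h * (m%:R * a m) = a m * (m%:R * h) by ring.
  rewrite ler_wpM2l //; have := bern1 h m hh; lra.
apply: ler_wpM2l; first by case/andP: hh.
exact: series_le_lim ma n ma0 cda.
Qed.

Lemma diff_lb (eta : R) : 0 < eta -> exists h0 : R, 0 < h0 /\
  forall h : R, 0 < h -> h <= h0 -> h <= 1 -> h * (dgf1 a - eta) <= gf a 1 - gf a (1 - h).
Proof.
move=> e0; have [N hN] := series_near_lim (series ma) (eta / 2) cda (divr_gt0 e0 (ltr0Sn R 1)).
have hN' : dgf1 a - eta / 2 <= series ma N by exact: hN.
clear hN; set D := dgf1 a in hN' *.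
set P := series ma N in hN'.
have PD : P <= D := series_le_lim ma N ma0 cda.
have D0 : 0 <= D := dgf1_ge0.
have P0 : 0 <= P by rewrite /P /series /=; apply: sumr_ge0 => m _; exact: ma0.
have N0 : 0 <= (N%:R : R) by [].
have den : 0 < 2 * (N%:R * D + 1) by rewrite mulr_gt0 // ltr_wpDl // mulr_ge0.
exists (eta / (2 * (N%:R * D + 1))); split; first by rewrite divr_gt0.
move=> h h0 hh0 h1.
have hh : 0 <= h <= 1 by rewrite h1 ltW.
have key : N%:R * h * D <= eta / 2.
  have hk : h * (2 * (N%:R * D + 1)) <= eta by rewrite -ler_pdivlMr.
  have X0 : 0 <= N%:R * D by rewrite mulr_ge0.
  move: hk X0; set X := N%:R * D.
  have -> : N%:R * h * D = h * X by rewrite /X; ring.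
  move=> hk X0; have : 0 <= h * X by rewrite mulr_ge0 // ltW.
  nra.
rewrite gf_diff //.
apply: le_trans (series_le_lim _ N (fun m => dterm_ge0 h m hh) (dterm_cvg h hh)).
apply: le_trans (_ : (h - N%:R * h ^+ 2) * P <= _).
  have hP : h * (D - eta) <= h * P - h * (eta / 2).
    rewrite -mulrBr; apply: ler_wpM2l; [exact: ltW|lra].
  apply: le_trans hP _.
  have : N%:R * h ^+ 2 * P <= h * (eta / 2).
    apply: le_trans (_ : N%:R * h ^+ 2 * D <= _).
      by rewrite ler_wpM2l // mulr_ge0 // exprn_ge0 // ltW.
    have -> : N%:R * h ^+ 2 * D = h * (N%:R * h * D) by ring.
    by rewrite ler_wpM2l // ltW.
  move=> q; rewrite mulrBl; lra.
rewrite /P /series /= mulr_sumr; apply: ler_sum_nat => m /andP[_ mN].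
rewrite dterm_eq /ma.
have -> : (h - N%:R * h ^+ 2) * (m%:R * a m) = a m * ((h - N%:R * h ^+ 2) * m%:R) by ring.
rewrite ler_wpM2l //.
have hb := bern2 h m hh.
have mN' : (m%:R : R) <= N%:R by rewrite ler_nat ltnW.
have : (m%:R * h) ^+ 2 <= N%:R * h ^+ 2 * m%:R.
  have -> : N%:R * h ^+ 2 * m%:R = m%:R * h ^+ 2 * N%:R by ring.
  have -> : (m%:R * h) ^+ 2 = m%:R * h ^+ 2 * m%:R by ring.
  by apply: ler_wpM2l => //; rewrite mulr_ge0 // exprn_ge0 // ltW.
move=> q; rewrite mulrBl mulrAC; lra.
Qed.

End Deriv.
Arguments dgf1_ge0 {R a}.
Arguments diff_ge0 {R a}.
Arguments diff_le {R a}.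
Arguments diff_lb {R a}.

Section FinMin.
Variable R : realType.

Lemma fin_min_seq (I : eqType) (s : seq I) (P : I -> R -> Prop) :
  (forall i, exists h0 : R, 0 < h0 /\ forall h, 0 < h -> h <= h0 -> P i h) ->
  exists h0 : R, 0 < h0 /\ forall i, i \in s -> forall h, 0 < h -> h <= h0 -> P i h.
Proof.
move=> H; elim: s => [|i s [h1 [h10 IH]]].
  by exists 1; split => // i; rewrite in_nil.
have [h2 [h20 H2]] := H i.
exists (Order.min h1 h2); split; first by rewrite lt_min h10 h20.
move=> j; rewrite in_cons => /orP[/eqP ->|js] h h0; rewrite le_min => /andP[hh1 hh2].
  exact: H2.
exact: IH.
Qed.

Lemma fin_min (I : finType) (P : I -> R -> Prop) :
  (forall i, exists h0 : R, 0 < h0 /\ forall h, 0 < h -> h <= h0 -> P i h) ->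
  exists h0 : R, 0 < h0 /\ forall i h, 0 < h -> h <= h0 -> P i h.
Proof.
move=> H; have [h0 [h00 H0]] := @fin_min_seq I (enum I) P H.
by exists h0; split => // i; apply: H0; rewrite mem_enum.
Qed.

End FinMin.

Section Near1.
Variable R : realType.
Variables a b c d : nat -> R.
Hypothesis a0 : forall m, 0 <= a m.
Hypothesis b0 : forall m, 0 <= b m.
Hypothesis c0 : forall m, 0 <= c m.
Hypothesis d0 : forall m, 0 <= d m.
Hypothesis ca : gf_finite1 a.
Hypothesis cb : gf_finite1 b.
Hypothesis cc : gf_finite1 c.
Hypothesis cd : gf_finite1 d.
Hypothesis dca : dgf1_finite a.
Hypothesis dcb : dgf1_finite b.
Hypothesis dcc : dgf1_finite c.
Hypothesis dcd : dgf1_finite d.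
Hypothesis A1pos : 0 < gf a 1.
Hypothesis D1pos : 0 < gf d 1.

Definition Mlam (z : R) : R :=
  lam (gf b z - z * (gf a 1 + gf b 1)) (gf c z - z * (gf c 1 + gf d 1)) (gf a z) (gf d z).

Definition Ei : R :=
  (gf a 1 + gf d 1)^-1 *
  (gf d 1 * (dgf1 a - gf a 1 + dgf1 b - gf b 1) + gf a 1 * (dgf1 c - gf c 1 + dgf1 d - gf d 1)).

Lemma near1 (eps : R) : 0 < eps -> exists h0 : R, 0 < h0 /\
  forall h, 0 < h -> h <= h0 -> Mlam (1 - h) <= h * (- Ei + eps).
Proof.
move=> e0.
set A1 := gf a 1; set B1 := gf b 1; set C1 := gf c 1; set D1 := gf d 1.
set A' := dgf1 a; set B' := dgf1 b; set C' := dgf1 c; set D' := dgf1 d.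
have Ap : 0 <= A' := dgf1_ge0 a0 dca.
have Bp : 0 <= B' := dgf1_ge0 b0 dcb.
have Cp : 0 <= C' := dgf1_ge0 c0 dcc.
have Dp : 0 <= D' := dgf1_ge0 d0 dcd.
have B10 : 0 <= B1 by apply: gf_ge0 => //; rewrite ler01 lexx.
have C10 : 0 <= C1 by apply: gf_ge0 => //; rewrite ler01 lexx.
set d1 := A' + B' - A1 - B1; set d2 := C' + D' - C1 - D1.
set w := (d2 - d1) / (A1 + D1).
have AD : 0 < A1 + D1 by rewrite addr_gt0.
have hw1 : - (A1 * w) = d1 - Ei.
  rewrite /w /Ei -/A1 -/B1 -/C1 -/D1 -/A' -/B' -/C' -/D'; rewrite /d1 /d2; field.
  by rewrite gt_eqF.
have hw2 : D1 * w = d2 - Ei.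
  rewrite /w /Ei -/A1 -/B1 -/C1 -/D1 -/A' -/B' -/C' -/D'; rewrite /d1 /d2; field.
  by rewrite gt_eqF.
set eta := eps / 4.
have eta0 : 0 < eta by rewrite divr_gt0.
have [ha [ha0 Ha]] := diff_lb a0 ca dca _ eta0.
have [hb [hb0 Hb]] := diff_lb b0 cb dcb _ eta0.
have [hc [hc0 Hc]] := diff_lb c0 cc dcc _ eta0.
have [hd [hd0 Hd]] := diff_lb d0 cd dcd _ eta0.
set K := `|w| * (A1 + B1 + `|Ei| + eps + B' + D') + 1.
have K0 : 0 < K by rewrite ltr_wpDl // mulr_ge0 // !addr_ge0 // ltW.
set hw := (2 * `|w| + 1)^-1.
have hw0 : 0 < hw by rewrite invr_gt0 ltr_wpDl // mulr_ge0.
set hK := eps / (2 * K).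
have hK0 : 0 < hK by rewrite divr_gt0 // mulr_gt0.
exists (Order.min (Order.min (Order.min ha hb) (Order.min hc hd)) (Order.min (2^-1) (Order.min hw hK))).
split; first by rewrite !lt_min ha0 hb0 hc0 hd0 hw0 hK0 invr_gt0 ltr0n.
move=> h h0; rewrite !le_min => /andP[/andP[/andP[hha hhb] /andP[hhc hhd]] /andP[hh2 /andP[hhw hhK]]].
have h1 : h <= 1 by apply: le_trans hh2 _; lra.
have hh : 0 <= h <= 1 by rewrite h1 ltW.
set yA := A1 - gf a (1 - h); set yB := B1 - gf b (1 - h).
set yC := C1 - gf c (1 - h); set yD := D1 - gf d (1 - h).
have lA : h * (A' - eta) <= yA := Ha h h0 hha h1.
have lB : h * (B' - eta) <= yB := Hb h h0 hhb h1.
have lC : h * (C' - eta) <= yC := Hc h h0 hhc h1.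
have lD : h * (D' - eta) <= yD := Hd h h0 hhd h1.
have uB : yB <= h * B' := diff_le b0 cb dcb h hh.
have uD : yD <= h * D' := diff_le d0 cd dcd h hh.
have gB : 0 <= yB := diff_ge0 b0 cb h hh.
have gD : 0 <= yD := diff_ge0 d0 cd h hh.
have eA : gf a (1 - h) = A1 - yA by rewrite /yA; ring.
have eB : gf b (1 - h) = B1 - yB by rewrite /yB; ring.
have eC : gf c (1 - h) = C1 - yC by rewrite /yC; ring.
have eD : gf d (1 - h) = D1 - yD by rewrite /yD; ring.
have hz : 0 <= 1 - h <= 1 by lra.
have gA0 : 0 <= gf a (1 - h) := gf_ge0 a0 ca hz.
have gD0 : 0 <= gf d (1 - h) := gf_ge0 d0 cd hz.
have hwsmall : h * `|w| <= 2^-1.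
  have pos : 0 < 2 * `|w| + 1 by rewrite ltr_wpDl // mulr_ge0.
  have : h * (2 * `|w| + 1) <= 1 by rewrite -ler_pdivlMr // mul1r.
  have : 0 <= h by exact: ltW.
  nra.
have hKsmall : h * K <= eps / 2.
  have : h * (2 * K) <= eps by rewrite -ler_pdivlMr ?mulr_gt0.
  lra.
have v10 : 0 < 1 + h * w.
  have : - `|w| <= w by rewrite lerNl ler_normr lexx orbT.
  have : 0 <= h by exact: ltW.
  nra.
rewrite /Mlam eA eB eC eD.
apply: (lam_CW _ _ _ _ _ (1 + h * w) 1) => //.
- by rewrite -eA.
- by rewrite -eD.
-
  set E := Ei; rewrite -/E in hw1 hw2.
  have wb : h * w * (h * (A1 + B1 + E - eps) - yB) <= h * (eps / 2).
    have : `|h * w * (h * (A1 + B1 + E - eps) - yB)| <= h * (h * K).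
      rewrite normrM normrM (gtr0_norm h0).
      rewrite -mulrA; apply: ler_wpM2l; first exact: ltW.
      apply: le_trans (_ : `|w| * (h * (A1 + B1 + `|E| + eps) + h * B') <= _).
        apply: ler_wpM2l => //.
        have e1 : h * E <= h * `|E| by apply: ler_wpM2l; [exact: ltW|exact: ler_norm].
        have e2 : - (h * `|E|) <= h * E.
          by rewrite -mulrN; apply: ler_wpM2l; [exact: ltW|rewrite lerNl -normrN; exact: ler_norm].
        have hA : 0 <= h * A1 by apply: mulr_ge0; apply: ltW.
        have hB : 0 <= h * B1 by apply: mulr_ge0 => //; apply: ltW.
        have he : 0 <= h * eps by apply: mulr_ge0; apply: ltW.
        rewrite ler_norml; apply/andP; split; lra.
      have -> : `|w| * (h * (A1 + B1 + `|E| + eps) + h * B') = (h * `|w|) * (A1 + B1 + `|E| + eps + B') by ring.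
      have -> : h * K = (h * `|w|) * (A1 + B1 + `|E| + eps + B') + ((h * `|w|) * D' + h) by rewrite /K; ring.
      rewrite lerDl; apply: addr_ge0; last exact: ltW.
      by apply: mulr_ge0 => //; apply: mulr_ge0 => //; exact: ltW.
    move=> q; apply: le_trans (ler_norm _) _; apply: le_trans q _.
    by rewrite ler_wpM2l // ltW.
  rewrite -/A1 -/B1 -subr_le0.
  have key : (B1 - yB - (1 - h) * (A1 + B1)) * (1 + h * w) + (A1 - yA) * 1 - h * (- E + eps) * (1 + h * w)
     = h * (- (A1 * w) + A1 + B1 + E - eps) - yB - yA + h * w * (h * (A1 + B1 + E - eps) - yB) by ring.
  rewrite key hw1 /d1 /eta.
  rewrite /eta in lA lB wb.
  lra.
-
  set E := Ei; rewrite -/E in hw1 hw2.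
  have wb : - (yD * (h * w)) <= h * (eps / 2).
    have : `|yD * (h * w)| <= h * (h * K).
      rewrite normrM normrM (gtr0_norm h0) (ger0_norm gD).
      apply: le_trans (_ : h * D' * (h * `|w|) <= _).
        by apply: ler_wpM2r; [rewrite mulr_ge0 // ltW|].
      have -> : h * D' * (h * `|w|) = h * (h * (`|w| * D')) by ring.
      apply: ler_wpM2l; first exact: ltW.
      apply: ler_wpM2l; first exact: ltW.
      rewrite /K.
      have : `|w| * D' <= `|w| * (A1 + B1 + `|E| + eps + B' + D').
        rewrite ler_wpM2l //.
        have : 0 <= A1 + B1 + `|E| + eps + B' by rewrite !addr_ge0 // ?ltW.
        lra.
      lra.
    move=> q; rewrite -normrN in q; apply: le_trans (ler_norm _) _; apply: le_trans q _.
    by rewrite ler_wpM2l // ltW.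
  rewrite -/C1 -/D1 -subr_le0.
  have key : (D1 - yD) * (1 + h * w) + (C1 - yC - (1 - h) * (C1 + D1)) * 1 - h * (- E + eps) * 1
     = h * (D1 * w + C1 + D1 + E - eps) - yD - yC - yD * (h * w) by ring.
  rewrite key hw2 /d2 /eta.
  rewrite /eta in lC lD wb.
  lra.
Qed.

End Near1.

Section Main.
Variable R : realType.
Implicit Types (a b c d : nat -> R) (z : R).

Definition Xlam a b c d z : R :=
  lam (gf b z / z + (gf c 1 + gf d 1)) (gf c z / z + (gf a 1 + gf b 1)) (gf a z / z) (gf d z / z).
Definition kk a b c d : R := gf a 1 + gf b 1 + gf c 1 + gf d 1.

Lemma Mlam_X a b c d z : 0 < z -> Mlam R a b c d z = z * (Xlam a b c d z - kk a b c d).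
Proof.
move=> z0; have zn : z != 0 by rewrite gt_eqF.
rewrite /Mlam /Xlam /kk.
set p := gf b z / z - (gf a 1 + gf b 1).
set q := gf c z / z - (gf c 1 + gf d 1).
set k := gf a 1 + gf b 1 + gf c 1 + gf d 1.
have -> : gf b z / z + (gf c 1 + gf d 1) = p + k by rewrite /p /k; ring.
have -> : gf c z / z + (gf a 1 + gf b 1) = q + k by rewrite /q /k; ring.
rewrite lam_shift addrK.
have -> : gf b z - z * (gf a 1 + gf b 1) = z * p by rewrite /p; field.
have -> : gf c z - z * (gf c 1 + gf d 1) = z * q by rewrite /q; field.
have e1 : gf a z = z * (gf a z / z) by field.
have e2 : gf d z = z * (gf d z / z) by field.
by rewrite [in X in lam _ _ X _]e1 [in X in lam _ _ _ X]e2 lam_scale.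
Qed.

Definition term a b c d (x z : R) : R :=
  x * Rfun a b c d z + gf b z + gf c z - z ^+ Kc * (gf a 1 + gf b 1 + gf c 1 + gf d 1).

Lemma term1 a b c d z : term a b c d 1 z = 2 * Mlam R a b c d z.
Proof.
rewrite /term /Rfun /Mlam /lam /Kc expr1 mul1r.
have -> : (gf b z - z * (gf a 1 + gf b 1) - (gf c z - z * (gf c 1 + gf d 1))) ^+ 2 + 4 * gf a z * gf d z
  = Ffun a b c d z ^+ 2 + 4 * gf a z * gf d z by rewrite /Ffun /Kc expr1; ring.
by field.
Qed.

Lemma term_le a b c d x z : (x = 1 \/ x = -1) -> term a b c d x z <= term a b c d 1 z.
Proof.
have r0 : 0 <= Rfun a b c d z by exact: sqrtr_ge0.
case=> ->; first by [].
rewrite /term !lerD2r; lra.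
Qed.

Lemma G_eq (b1 b u : R) : 0 < b1 -> b1 < b -> b < u ->
  let th := (ln u - ln b) / (ln u - ln b1) in
  [/\ 0 < th, th < 1 & G R th b1 u = b].
Proof.
move=> b10 h1 h2 th.
have b0 : 0 < b by apply: lt_trans h1.
have u0 : 0 < u by apply: lt_trans h2.
have l1 : ln b1 < ln b by rewrite ltr_ln.
have l2 : ln b < ln u by rewrite ltr_ln.
have den : 0 < ln u - ln b1 by lra.
split.
- by rewrite /th divr_gt0 // subr_gt0.
- by rewrite /th ltr_pdivrMr // mul1r; lra.
- rewrite /G /powR !gt_eqF // -expRD.
  have -> : th * ln b1 + (1 - th) * ln u = ln b.
    rewrite /th; field; by rewrite gt_eqF.
  by rewrite lnK.
Qed.

End Main.
Arguments Xlam {R}. Arguments kk {R}. Arguments Mlam_X {R}. Arguments term {R}.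
Arguments term1 {R}. Arguments term_le {R}. Arguments G_eq {R}.

Theorem corollary3 (R : realType) (c : nat) (hc : (1 <= c)%N)
  (a b cc d : 'I_c -> nat -> R)
  (hA : forall i, assumptionA (a i) (b i) (cc i) (d i))
  (hE : ergodicE a b cc d) :
  forall (x : 'I_c -> R), (forall i, x i = 1 \/ x i = -1) ->
  forall beta beta1 : R,
    0 < beta < 1 -> eqEx a b cc d x beta ->
    0 < beta1 < 1 -> eqEx a b cc d (fun _ => 1) beta1 ->
    beta <= beta1.
Proof.
move=> x hx beta beta1 /andP[be0 be1] hEx /andP[b10 b11] hE1.
rewrite leNgt; apply/negP => hlt.
have a0 : forall i m, 0 <= a i m by move=> i; case: (hA i) => [[? _] _].
have b0 : forall i m, 0 <= b i m by move=> i; case: (hA i) => [[_ [? _]] _].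
have c0 : forall i m, 0 <= cc i m by move=> i; case: (hA i) => [[_ [_ [? _]]] _].
have d0 : forall i m, 0 <= d i m by move=> i; case: (hA i) => [[_ [_ [_ ?]]] _].
have ca : forall i, gf_finite1 (a i) by move=> i; case: (hA i) => [_ [[? _] _]].
have cb : forall i, gf_finite1 (b i) by move=> i; case: (hA i) => [_ [[_ [? _]] _]].
have cc1 : forall i, gf_finite1 (cc i) by move=> i; case: (hA i) => [_ [[_ [_ [? _]]] _]].
have cd : forall i, gf_finite1 (d i) by move=> i; case: (hA i) => [_ [[_ [_ [_ ?]]] _]].
have Ap : forall i, 0 < gf (a i) 1 by move=> i; case: (hA i) => [_ [_ [[? _] _]]].
have Dp : forall i, 0 < gf (d i) 1 by move=> i; case: (hA i) => [_ [_ [[_ ?] _]]].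
have dca : forall i, dgf1_finite (a i) by move=> i; case: (hA i) => [_ [_ [_ [[? _] _]]]].
have dcb : forall i, dgf1_finite (b i) by move=> i; case: (hA i) => [_ [_ [_ [[_ [? _]] _]]]].
have dcc : forall i, dgf1_finite (cc i) by move=> i; case: (hA i) => [_ [_ [_ [[_ [_ [? _]]] _]]]].
have dcd : forall i, dgf1_finite (d i) by move=> i; case: (hA i) => [_ [_ [_ [[_ [_ [_ ?]]] _]]]].
have one01 : 0 <= (1 : R) <= 1 by rewrite ler01 lexx.
set Psi := fun z : R => \sum_(i < c) (Xlam (a i) (b i) (cc i) (d i) z - kk (a i) (b i) (cc i) (d i)).
have sumM : forall z, 0 < z -> \sum_(i < c) Mlam R (a i) (b i) (cc i) (d i) z = z * Psi z.
  by move=> z z0; rewrite /Psi mulr_sumr; apply: eq_bigr => i _; rewrite Mlam_X.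
have P1 : Psi beta1 = 0.
  have T1 : 0 = \sum_(i < c) term (a i) (b i) (cc i) (d i) 1 beta1 := hE1.
  have : 0 = \sum_(i < c) 2 * Mlam R (a i) (b i) (cc i) (d i) beta1.
    by apply: (eq_trans T1); apply: eq_bigr => i _; rewrite -term1.
  rewrite -mulr_sumr sumM // => /esym/eqP; rewrite !mulf_eq0 pnatr_eq0 /= gt_eqF //= => /eqP //.
have P0 : 0 <= Psi beta.
  have Tx : 0 = \sum_(i < c) term (a i) (b i) (cc i) (d i) (x i) beta := hEx.
  have : 0 <= \sum_(i < c) 2 * Mlam R (a i) (b i) (cc i) (d i) beta.
    rewrite [leLHS]Tx; apply: ler_sum => i _; rewrite -term1; exact: term_le.
  by rewrite -mulr_sumr sumM // pmulr_rge0 // pmulr_rge0.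
(* ergodicity gives u in (beta, 1) with Psi u < 0 *)
set E := \sum_(i < c) Ei R (a i) (b i) (cc i) (d i).
have EE : 0 < E.
  move: hE; rewrite /ergodicE /E /Kc mulr1n.
  by congr (0 < _); apply: eq_bigr => i _; rewrite /Ei !mul1r.
have c0' : 0 < (c%:R : R) by rewrite ltr0n.
set eps := E / (2 * c%:R).
have eps0 : 0 < eps by rewrite divr_gt0 // mulr_gt0.
have [h0 [h00 H0]] := @fin_min R _ (fun i h => Mlam R (a i) (b i) (cc i) (d i) (1 - h) <= h * (- Ei R (a i) (b i) (cc i) (d i) + eps))
  (fun i => @near1 R (a i) (b i) (cc i) (d i) (a0 i) (b0 i) (c0 i) (d0 i) (ca i) (cb i) (cc1 i) (cd i) (dca i) (dcb i) (dcc i) (dcd i) (Ap i) (Dp i) eps eps0).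
set h := Order.min h0 ((1 - beta) / 2).
have h0' : 0 < h by rewrite lt_min h00 divr_gt0 // subr_gt0.
have hle : h <= h0 by rewrite ge_min lexx.
have hle2 : h <= (1 - beta) / 2 by rewrite ge_min lexx orbT.
set u := 1 - h.
have bu : beta < u by rewrite /u; lra.
have u1 : u < 1 by rewrite /u; lra.
have u0 : 0 < u by lra.
have Pu : Psi u < 0.
  have : \sum_(i < c) Mlam R (a i) (b i) (cc i) (d i) u <= h * (- E + c%:R * eps).
    apply: le_trans (_ : \sum_(i < c) h * (- Ei R (a i) (b i) (cc i) (d i) + eps) <= _).
      by apply: ler_sum => i _; apply: H0.
    rewrite -mulr_sumr big_split /= sumrN /E sumr_const card_ord.
    by rewrite mulr_natl.
  rewrite sumM // /eps.
  have -> : c%:R * (E / (2 * c%:R)) = E / 2 by field; rewrite gt_eqF.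
  move=> q.
  have : u * Psi u < 0.
    apply: le_lt_trans q _; rewrite pmulr_rlt0 //; lra.
  by rewrite pmulr_rlt0.
have [th0 th1 Gb] := G_eq beta1 beta u b10 hlt bu.
set th := (ln u - ln beta) / (ln u - ln beta1) in th0 th1 Gb.
have hb1 : 0 < beta1 <= 1 by rewrite b10 ltW.
have hbu : 0 < u <= 1 by rewrite u0 ltW.
have conv : forall i, Xlam (a i) (b i) (cc i) (d i) beta <=
   th * Xlam (a i) (b i) (cc i) (d i) beta1 + (1 - th) * Xlam (a i) (b i) (cc i) (d i) u.
  move=> i.
  have pos : forall (s : nat -> R) z, (forall m, 0 <= s m) -> gf_finite1 s -> 0 < gf s 1 ->
     0 < z <= 1 -> 0 < gf s z / z.
    by move=> s z s0 cs g1 hz; rewrite divr_gt0 ?(gf_pos s0 cs g1 hz) //; case/andP: hz.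
  have nn : forall (s : nat -> R) z, (forall m, 0 <= s m) -> gf_finite1 s ->
     0 < z <= 1 -> 0 <= gf s z / z.
    move=> s z s0 cs hz; rewrite divr_ge0 //; last by case/andP: hz => /ltW.
    by apply: gf_ge0 => //; case/andP: hz => /ltW -> ->.
  have hbe : 0 < beta <= 1 by rewrite be0 ltW.
  have k1 : 0 <= gf (cc i) 1 + gf (d i) 1 by rewrite addr_ge0 // gf_ge0.
  have k2 : 0 <= gf (a i) 1 + gf (b i) 1 by rewrite addr_ge0 // gf_ge0.
  have LC := @entry_LC R th beta1 u th0 th1 hb1 hbu.
  have Xpos : forall z, 0 < z <= 1 -> 0 <= Xlam (a i) (b i) (cc i) (d i) z.
    move=> z hz; rewrite /Xlam.
    have := lam_subp_gt0 (gf (b i) z / z + (gf (cc i) 1 + gf (d i) 1)) (gf (cc i) z / z + (gf (a i) 1 + gf (b i) 1))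
      (pos _ _ (a0 i) (ca i) (Ap i) hz) (pos _ _ (d0 i) (cd i) (Dp i) hz).
    have : 0 <= gf (b i) z / z + (gf (cc i) 1 + gf (d i) 1) by rewrite addr_ge0 // nn.
    lra.
  apply: le_trans (G_young th0 th1 _ _ (Xpos _ hb1) (Xpos _ hbu)).
  rewrite /Xlam; apply: kingman => //.
  - by rewrite addr_ge0 // nn.
  - by rewrite addr_ge0 // nn.
  - exact: pos.
  - exact: pos.
  - by rewrite addr_ge0 // nn.
  - by rewrite addr_ge0 // nn.
  - exact: pos.
  - exact: pos.
  - by rewrite addr_ge0 // nn.
  - by rewrite addr_ge0 // nn.
  - exact: nn.
  - exact: nn.
  - by rewrite -Gb; apply: LC.
  - by rewrite -Gb; apply: LC.
  - by have := LC (a i) 0 (a0 i) (ca i) (lexx 0); rewrite !addr0 Gb.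
  - by have := LC (d i) 0 (d0 i) (cd i) (lexx 0); rewrite !addr0 Gb.
have : Psi beta <= th * Psi beta1 + (1 - th) * Psi u.
  rewrite /Psi !mulr_sumr -big_split /=; apply: ler_sum => i _.
  have := conv i; set k := kk _ _ _ _; lra.
rewrite P1 mulr0 add0r => q.
have : (1 - th) * Psi u < 0 by rewrite pmulr_rlt0 // subr_gt0.
lra.
Qed.
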